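(* Let $m$ be a square-free integer and let $B$ be a commutative algebra over $A=\mathbb{Z}/m\mathbb{Z}$ that is free of finite rank as an $A$-module. If $p>\operatorname{rk}_A(B)$ for all primes $p$ dividing $m$, then $\operatorname{Trad}(B/A)=\operatorname{nil}(B)$.
   Context: For commutative rings $A\subseteq B$ with $B$ free of finite rank over $A$, $\operatorname{Tr}_{B/A}:B\to A$ sends $x$ to the trace of the $A$-linear map $y\mapsto xy$ on $B$, and the trace radical is $\operatorname{Trad}(B/A)=\{x\in B: \operatorname{Tr}_{B/A}(xB)=0\}$. $\operatorname{nil}(B)$ is the ideal of nilpotent elements of $B$. *)

(* Defs.v *)
From HB Require Import structures.
From mathcomp Require Import all_boot all_order all_algebra.
Set Implicit Arguments. Unset Strict Implicit. Unset Printing Implicit Defensive.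
Import GRing.Theory.
Local Open Scope ring_scope.

Definition squarefree (m : nat) : Prop :=
  forall p : nat, prime p -> ~~ (p * p %| m)%N.

(* Trace Tr_{B/A}(x): trace of the A-linear map y |-> x*y, computed in the
   coordinates given by a linear isomorphism phi : B -> A^n with inverse psi. *)
Definition algTrace (A : comNzRingType) (B : comAlgType A) (n : nat)
  (phi : B -> 'rV[A]_n) (psi : 'rV[A]_n -> B) (x : B) : A :=
  \tr (lin1_mx (fun v : 'rV[A]_n => phi (x * psi v))).

Definition in_Trad (A : comNzRingType) (B : comAlgType A) (n : nat)
  (phi : B -> 'rV[A]_n) (psi : 'rV[A]_n -> B) (x : B) : Prop :=
  forall y : B, algTrace phi psi (x * y) = 0.

Definition is_nilpotent (R : pzRingType) (x : R) : Prop :=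
  exists k : nat, x ^+ k = 0.

(* Main.v *)
Require Import Defs.
From HB Require Import structures.
From mathcomp Require Import all_boot all_order all_algebra.
From mathcomp Require Import zify ring.
Set Implicit Arguments. Unset Strict Implicit. Unset Printing Implicit Defensive.
Import GRing.Theory.
Local Open Scope ring_scope.

Definition red_ m p (m_gt1 : (1 < m)%N) (pp : prime p) (pm : (p %| m)%N)
  (x : 'Z_m) : 'F_p := (x : nat)%:R.

Section Red.
Variables (m p : nat) (m_gt1 : (1 < m)%N) (pp : prime p) (pm : (p %| m)%N).

Local Notation red := (red_ m_gt1 pp pm).

Lemma natFp_mod a : ((a %% m)%N%:R : 'F_p) = a%:R.
Proof.
rewrite {2}(divn_eq a m) natrD natrM.
have -> : (m%:R : 'F_p) = 0 by apply/eqP; rewrite -(dvdn_pcharf (pchar_Fp pp)).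
by rewrite mulr0 add0r.
Qed.

Lemma valZm (x : 'Z_m) : (x < m)%N.
Proof. by apply: leq_trans (ltn_ord x) _; rewrite Zp_cast. Qed.

Lemma valZ_add (x y : 'Z_m) : nat_of_ord (x + y)%R = ((x + y) %% m)%N.
Proof. by rewrite /=; congr modn; apply: Zp_cast. Qed.
Lemma valZ_mul (x y : 'Z_m) : nat_of_ord (x * y)%R = ((x * y) %% m)%N.
Proof. by rewrite /=; congr modn; apply: Zp_cast. Qed.
Lemma valZ_opp (x : 'Z_m) : nat_of_ord (- x)%R = ((m - x) %% m)%N.
Proof. by rewrite /=; move: (nat_of_ord x) => k; rewrite Zp_cast. Qed.

Lemma red_zmod : zmod_morphism red.
Proof.
move=> x y; rewrite /red_ valZ_add natFp_mod natrD valZ_opp natFp_mod natrB.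
  by rewrite -(natFp_mod m) modnn add0r.
exact/ltnW/valZm.
Qed.

Lemma red_monoid : monoid_morphism red.
Proof.
split; first by rewrite /red_ /= modn_small.
by move=> x y; rewrite /red_ valZ_mul natFp_mod natrM.
Qed.

HB.instance Definition _ := GRing.isZmodMorphism.Build _ _ (red_ m_gt1 pp pm) red_zmod.
HB.instance Definition _ := GRing.isMonoidMorphism.Build _ _ (red_ m_gt1 pp pm) red_monoid.

Lemma red_eq0 (x : 'Z_m) : (red x == 0) = (p %| x)%N.
Proof. by rewrite /red_ (dvdn_pcharf (pchar_Fp pp)). Qed.
End Red.

Lemma sqf_eq0 m (m_gt1 : (1 < m)%N) (sqf : squarefree m) (x : 'Z_m) :
  (forall p (pp : prime p) (pm : (p %| m)%N), red_ m_gt1 pp pm x = 0) -> x = 0.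
Proof.
move=> H.
have : (m %| x)%N.
  apply/dvdn_partP; first exact: ltnW.
  move=> p; rewrite mem_primes => /and3P[pp _ pm].
  rewrite p_part.
  have l1 : (logn p m <= 1)%N.
    rewrite leqNgt; apply/negP => h; move: (sqf p pp); rewrite mulnn.
    rewrite (pfactor_dvdn 2 pp); last exact: ltnW.
    by rewrite h.
  have l0 : (0 < logn p m)%N.
    by rewrite -(pfactor_dvdn 1 pp) ?expn1 //; apply: ltnW.
  have -> : logn p m = 1%N by apply/eqP; rewrite eqn_leq l1 l0.
  by rewrite expn1 -(red_eq0 m_gt1 pp pm) (H p pp pm).
move=> /dvdn_leq h; apply/val_inj => /=.
case: (posnP x) => // /h; rewrite leqNgt (valZm m_gt1) //.
Qed.

Lemma sum_lt_min (n r : nat) : (\sum_(i < n) (i < r)%N)%N = minn r n.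
Proof.
elim: n => [|n IH]; first by rewrite big_ord0; lia.
rewrite big_ord_recr /= IH; case: (ltnP n r) => h /=; lia.
Qed.

Lemma tr_pid (F : fieldType) n r : (r <= n)%N -> \tr (pid_mx r : 'M[F]_n) = r%:R.
Proof.
move=> rn; rewrite /mxtrace.
rewrite (eq_bigr (fun i : 'I_n => ((i < r)%N)%:R)); last first.
  by move=> i _; rewrite mxE eqxx.
by rewrite -natr_sum sum_lt_min; congr _%:R; lia.
Qed.

Lemma tr_idem (F : fieldType) n (E : 'M[F]_n) : E *m E = E -> \tr E = (\rank E)%:R.
Proof.
move=> idE.
set r := \rank E; set L := col_ebase E; set U := row_ebase E.
have EE : E = L *m pid_mx r *m U by rewrite mulmx_ebase.
have uL : L \in unitmx := col_ebase_unit E.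
have uU : U \in unitmx := row_ebase_unit E.
have rn : (r <= n)%N by apply: rank_leq_row.
clearbody r L U; subst E.
have key : pid_mx r *m (U *m L) *m pid_mx r = pid_mx r :> 'M_n.
  have h : L *m (pid_mx r *m (U *m L) *m pid_mx r *m U) = L *m (pid_mx r *m U).
    by move: idE; rewrite !mulmxA.
  have h2 := can_inj (mulKmx uL) h.
  exact: (can_inj (mulmxK uU) h2).
rewrite -mulmxA mxtrace_mulC -{1}(@pid_mx_id F n n n r rn) -!mulmxA mxtrace_mulC.
by rewrite !mulmxA -(mulmxA _ U) key tr_pid.
Qed.

Lemma tr_hornerX (F : fieldType) n (M : 'M[F]_n.+1)
  (htr : forall k, (0 < k)%N -> \tr (M ^+ k) = 0) (r : {poly F}) :
  \tr (horner_mx M ('X * r)) = 0.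
Proof.
rewrite -[r]coefK poly_def mulr_sumr rmorph_sum raddf_sum big1 // => i _.
rewrite -scalerAr -exprS.
rewrite /= horner_mxZ mxtraceZ rmorphXn /= horner_mx_X htr //.
by rewrite mulr0.
Qed.

Lemma fieldL1 (F : fieldType) n (M : 'M[F]_n.+1)
  (hchar : forall r, (0 < r <= n.+1)%N -> r%:R != 0 :> F)
  (htr : forall k, (0 < k)%N -> \tr (M ^+ k) = 0) : M ^+ n.+1 = 0.
Proof.
set N := n.+1.
have CH := Cayley_Hamilton M.
set chi := char_poly M in CH.
have chi0 : chi != 0 := monic_neq0 (char_poly_monic M).
have [s [q nq0 Dchi]] := multiplicity_XsubC chi 0.
rewrite chi0 /= in nq0; rewrite polyC0 subr0 in Dchi.
have q0 : q != 0 by apply: contraNneq chi0 => q0; rewrite Dchi q0 mul0r.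
have sle : (s <= N)%N.
  have := size_char_poly M; rewrite -/chi Dchi size_mul ?expf_neq0 ?polyX_eq0 //.
  rewrite size_polyXn; have : (0 < size q)%N by rewrite size_poly_gt0.
  rewrite addnS /= => h1 h2; rewrite /N; move: h1 h2; set k := size _ => h1 h2.
  lia.
have e1 : horner_mx M ('X^N * q) = 0.
  have -> : 'X^N * q = 'X^(N - s) * chi by rewrite Dchi mulrCA -exprD subnK // mulrC.
  by rewrite rmorphM /= CH mulr0.
set c := q.[0].
have c0 : c != 0 by [].
have [h Dh] : exists h, q = c%:P + h * 'X.
  have : root (q - c%:P) 0 by rewrite /root !hornerE subrr.
  move/factor_theorem => [h Dh]; exists h.
  by rewrite polyC0 subr0 in Dh; rewrite -Dh addrC subrK.
set u := - c^-1 *: h.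
have KE : horner_mx M 'X^N = horner_mx M ('X^N * ('X * u)).
  have -> : 'X^N * ('X * u) = 'X^N - c^-1 *: ('X^N * q).
    apply/eqP; rewrite -subr_eq0; apply/eqP.
    have ci : c^-1%:P * c%:P = 1 by rewrite -polyCM mulVf.
    transitivity (- ('X^N * (1 - c^-1%:P * c%:P))); last by rewrite ci subrr mulr0 oppr0.
    rewrite /u Dh -!mul_polyC polyCN.
    move: ('X^N) ((c^-1)%:P) (c%:P) => P a b; ring.
  by rewrite rmorphB /= horner_mxZ e1 scaler0 subr0.
have iter : forall j, horner_mx M 'X^N = horner_mx M ('X^N * ('X * u) ^+ j).
  elim=> [|j IH]; first by rewrite expr0 mulr1.
  by rewrite exprS mulrA rmorphM /= -KE -rmorphM.
set e := horner_mx M ('X^N * u ^+ N).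
have idem : e *m e = e.
  rewrite mulmxE /e -rmorphM /=.
  have -> : 'X^N * u ^+ N * ('X^N * u ^+ N) = 'X^N * ('X * u) ^+ N * u ^+ N.
    by rewrite exprMn; move: ('X^N) (u ^+ N) => P a; ring.
  by rewrite rmorphM /= -iter -rmorphM.
have tre : \tr e = 0.
  by rewrite /e /N exprS -mulrA tr_hornerX.
have e0 : e = 0.
  apply/eqP; rewrite -mxrank_eq0; apply/negP => /negP nz.
  have := tr_idem idem; rewrite tre => /esym/eqP; apply/negP.
  by apply: hchar; rewrite lt0n nz rank_leq_row.
have -> : M ^+ N = horner_mx M 'X^N by rewrite rmorphXn /= horner_mx_X.
rewrite (iter N) exprMn rmorphM /=.
by rewrite -/e e0 mulr0.
Qed.

Lemma fieldL2 (F : fieldType) n (M : 'M[F]_n.+1) k : M ^+ k = 0 -> \tr M = 0.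
Proof.
move=> Mk.
set A := map_mx (@polyC F) M.
set X := ('X : {poly F})%:M : 'M[{poly F}]_n.+1.
have Ak : A ^+ k = 0 by rewrite /A -rmorphXn /= Mk map_mx0.
have cXA : GRing.comm X A by rewrite /GRing.comm -!mulmxE scalar_mxC.
have := subrXX_comm k cXA; rewrite Ak subr0.
set S := \sum_(i < k) _ => E.
have dv : char_poly M %| ('X - 0%:P) ^+ (k * n.+1).
  rewrite polyC0 subr0; apply/dvdpP; exists (\det S).
  rewrite mulrC /char_poly /char_poly_mx -/A -/X -det_mulmx mulmxE -E.
  by rewrite /X -rmorphXn /= det_scalar exprM.
have [j _ ej] := dvdp_exp_XsubCP dv.
rewrite polyC0 subr0 eqp_monic ?char_poly_monic ?monicXn // in ej.
move/eqP: ej => ej.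
have jn : j = n.+1.
  by have := size_char_poly M; rewrite ej size_polyXn => -[].
apply/eqP; rewrite -oppr_eq0 -char_poly_trace // ej jn coefXn /=.
by rewrite eqn_leq ltnn andbF.
Qed.


Section Alg.
Variables (m : nat) (B : comAlgType 'Z_m) (n : nat)
  (phi : {linear B -> 'rV['Z_m]_n}) (psi : 'rV['Z_m]_n -> B)
  (phiK : cancel phi psi) (psiK : cancel psi phi).

Definition multx (x : B) (v : 'rV['Z_m]_n) : 'rV['Z_m]_n := phi (x * psi v).

Lemma psi_lin a u v : psi (a *: u + v) = a *: psi u + psi v.
Proof. by apply: (can_inj phiK); rewrite psiK linearP /= !psiK. Qed.

Lemma multx_lin x : linear (multx x).
Proof. by move=> a u v; rewrite /multx psi_lin mulrDr -scalerAr linearP. Qed.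

HB.instance Definition _ x := GRing.isLinear.Build _ _ _ _ (multx x) (multx_lin x).

Definition Lm x := lin1_mx (multx x).

Lemma phiM x y : phi (x * y) = phi y *m Lm x.
Proof. by rewrite mul_rV_lin1 /= /multx phiK. Qed.

Lemma mxeq (A C : 'M['Z_m]_n) : (forall u : 'rV_n, u *m A = u *m C) -> A = C.
Proof. by move=> h; apply/row_matrixP => i; rewrite !rowE h. Qed.

Lemma LmM x y : Lm (x * y) = Lm y *m Lm x.
Proof.
apply: mxeq => u; rewrite mulmxA !mul_rV_lin1 /= /multx phiK.
by rewrite mulrA.
Qed.

Lemma Lm1 : Lm 1 = 1%:M.
Proof. by apply: mxeq => u; rewrite mul_rV_lin1 /= /multx mul1r psiK mulmx1. Qed.

Lemma Lm0 : Lm 0 = 0.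
Proof. by apply: mxeq => u; rewrite mul_rV_lin1 /= /multx mul0r linear0 mulmx0. Qed.

Lemma LmX x k : Lm (x ^+ k) = Lm x ^+ k.
Proof.
elim: k => [|k IH]; first by rewrite !expr0 Lm1.
by rewrite exprS LmM IH exprSr mulmxE.
Qed.

Lemma Lm_inj0 x : Lm x = 0 -> x = 0.
Proof.
move=> h; have : phi x = 0 by rewrite -[x]mulr1 phiM h mulmx0.
by move=> /(congr1 psi); rewrite phiK => ->; rewrite -(linear0 phi) phiK.
Qed.

End Alg.


Theorem proposition5p20 (m : nat) (m_gt1 : (1 < m)%N) (sqf : squarefree m)
  (B : comAlgType 'Z_m) (n : nat)
  (phi : {linear B -> 'rV['Z_m]_n}) (psi : 'rV['Z_m]_n -> B)
  (phiK : cancel phi psi) (psiK : cancel psi phi)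
  (hp : forall p : nat, prime p -> (p %| m)%N -> (n < p)%N) :
  forall x : B, in_Trad phi psi x <-> is_nilpotent x.
Proof.
case: n phi psi phiK psiK hp => [|n] phi psi phiK psiK hp x.
  exfalso; have := oner_neq0 B; rewrite -(phiK 1) (thinmx0 (phi 1)).
  by rewrite -(linear0 phi) phiK eqxx.
have trE : forall z, algTrace phi psi z = \tr (Lm phi psi z) by [].
split.
- move=> Hx; exists n.+1.
  apply: (Lm_inj0 phiK psiK); rewrite (LmX phiK psiK).
  set M := Lm phi psi x.
  have htr : forall k, (0 < k)%N -> \tr (M ^+ k) = 0.
    case=> // k _; have := Hx (x ^+ k); rewrite trE -exprS (LmX phiK psiK); exact.
  apply/matrixP => i j; rewrite mxE.
  apply: (@sqf_eq0 m m_gt1 sqf) => p pp pm.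
  have h : map_mx (red_ m_gt1 pp pm) (M ^+ n.+1) = 0.
    rewrite rmorphXn /=; apply: fieldL1.
    - move=> r /andP[r0 rn]; rewrite -(dvdn_pcharf (pchar_Fp pp)).
      apply/negP => /(dvdn_leq r0) pr.
      by have := hp p pp pm; rewrite ltnNge (leq_trans pr rn).
    - by move=> k k0; rewrite -rmorphXn /= trace_map_mx htr // rmorph0.
  by move/matrixP: h => /(_ i j); rewrite !mxE.
- rewrite /is_nilpotent /in_Trad => -[k xk] y; rewrite trE.
  apply: (@sqf_eq0 m m_gt1 sqf) => p pp pm.
  rewrite -trace_map_mx.
  apply: (@fieldL2 _ _ _ k).
  by rewrite -rmorphXn /= -(LmX phiK psiK) exprMn xk mul0r (Lm0 phiK psiK) map_mx0.
Qed.
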